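(* For every integer $t\ge 0$: $$A_3(9t+4,6,[3,1])\le 9t^2+6t+1+\left\lfloor\tfrac{t}{4}\right\rfloor,\quad A_3(9t+5,6,[3,1])\le 9t^2+7t+1+\left\lfloor\tfrac{t+1}{4}\right\rfloor,\quad A_3(9t+7,6,[3,1])\le 9t^2+11t+3+\left\lfloor\tfrac{t+1}{2}\right\rfloor.$$
   Context: For a finite set $X$ with $|X|=n$, a ternary code of length $n$ is a subset $\mathcal C\subseteq\mathbb Z_3^X$; its elements are codewords. The Hamming distance between $u,v\in\mathbb Z_3^X$ is the number of $x\in X$ with $u_x\ne v_x$. A vector $u$ has composition $[w_1,w_2]$ if exactly $w_1$ of its coordinates equal $1$ and exactly $w_2$ equal $2$ (all others $0$). An $(n,d,[w_1,w_2])_3$-code is a ternary code of length $n$ in which every codeword has composition $[w_1,w_2]$ and any two distinct codewords are at Hamming distance at least $d$. $A_3(n,d,[w_1,w_2])$ denotes the maximum number of codewords of an $(n,d,[w_1,w_2])_3$-code. *)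

(* Defs.v *)
From mathcomp Require Import all_boot.
Set Implicit Arguments. Unset Strict Implicit. Unset Printing Implicit Defensive.

Definition word (n : nat) := {ffun 'I_n -> 'I_3}.

Definition hdist n (u v : word n) : nat := #|[set x : 'I_n | u x != v x]|.

Definition wcount n (u : word n) (a : nat) : nat := #|[set x : 'I_n | nat_of_ord (u x) == a]|.

Definition has_composition n (u : word n) (w1 w2 : nat) : bool :=
  (wcount u 1 == w1) && (wcount u 2 == w2).

Definition is_const_comp_code n d w1 w2 (C : {set word n}) : bool :=
  [forall u in C, has_composition u w1 w2] &&
  [forall u in C, forall v in C, (u != v) ==> (d <= hdist u v)].

Definition A3 n d w1 w2 : nat :=
  \max_(C : {set word n} | is_const_comp_code d w1 w2 C) #|C|.

(* Main.v *)
Require Import Defs.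
From mathcomp Require Import all_boot.
From mathcomp Require Import zify.
Set Implicit Arguments. Unset Strict Implicit. Unset Printing Implicit Defensive.
Lemma card_sum (T : finType) (P : pred T) : #|[set i | P i]| = \sum_i P i.
Proof.
rewrite -sum1_card big_mkcond /=; apply: eq_bigr => i _; rewrite inE; by case: (P i).
Qed.

Lemma disj_count n (P : pred (word n)) (F : word n -> {set 'I_n}) (x : 'I_n) :
 (forall u, P u -> x \notin F u) ->
 (forall u v y, P u -> P v -> y \in F u -> y \in F v -> u = v) ->
 \sum_(u | P u) #|F u| <= n.-1.
Proof.
move=> Hx Hd.
have -> : \sum_(u | P u) #|F u| = \sum_(u | P u) \sum_y (y \in F u).
  by apply: eq_bigr => u _; rewrite -card_sum; apply: eq_card => y; rewrite inE.
rewrite exchange_big /=.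
apply: (@leq_trans (\sum_y (y != x))).
  apply: leq_sum => y _.
  case: (eqVneq y x) => [->|ne].
    by rewrite big1 // => u Pu; rewrite (negbTE (Hx u Pu)).
  case: (pickP (fun u => P u && (y \in F u))) => [u0 /andP[Pu0 yu0]|none].
    rewrite (bigD1 u0) //= yu0 big1 // => v /andP[Pv nv].
    case yv: (y \in F v) => //.
    by rewrite (Hd _ _ _ Pv Pu0 yv yu0) eqxx in nv.
  by rewrite big1 // => u Pu; have := none u; rewrite Pu /= => ->.
rewrite -card_sum.
have -> : [set i | i != x] = [set~ x] by apply/setP => i; rewrite !inE.
by rewrite cardsC1 card_ord.
Qed.

Definition supp n (u : word n) := [set i | nat_of_ord (u i) != 0].
Definition cnt n (u : word n) a := [set i | nat_of_ord (u i) == a].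

Lemma val3 (k : 'I_3) : [\/ nat_of_ord k = 0, nat_of_ord k = 1 | nat_of_ord k = 2].
Proof. case: k => [[|[|[|m]]] H] //=; by [constructor | constructor 2 | constructor 3]. Qed.

Lemma supp_card n (u : word n) : has_composition u 3 1 -> #|supp u| = 4.
Proof.
case/andP => /eqP H1 /eqP H2.
have -> : supp u = cnt u 1 :|: cnt u 2.
  apply/setP => i; rewrite !inE; by case: (val3 (u i)) => ->.
rewrite cardsU.
have -> : cnt u 1 :&: cnt u 2 = set0.
  apply/setP => i; rewrite !inE; by case: (val3 (u i)) => ->.
by rewrite cards0 /cnt; rewrite /wcount in H1 H2; rewrite H1 H2.
Qed.

Lemma close n (C : {set word n}) (u v : word n) (a b : 'I_n) :
  is_const_comp_code 6 3 1 C -> u \in C -> v \in C -> a != b ->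
  nat_of_ord (u a) != 0 -> nat_of_ord (v a) != 0 ->
  nat_of_ord (u b) != 0 -> nat_of_ord (v b) != 0 ->
  u a = v a -> u = v.
Proof.
move=> /andP[/forall_inP Hc /forall_inP Hd] uC vC ab ua va ub vb e.
apply/eqP; apply: contraT => nuv.
have := Hd u uC; move=> /forall_inP /(_ v vC) /implyP /(_ nuv).
have Hsu := supp_card (Hc u uC); have Hsv := supp_card (Hc v vC).
have sub : [set i | u i != v i] \subset (supp u :|: supp v) :\ a.
  apply/subsetP => i; rewrite !inE => neq.
  apply/andP; split.
    by apply: contraNneq neq => ->; rewrite e.
  apply: contraNT neq; rewrite negb_or !negbK => /andP[/eqP h1 /eqP h2].
  by rewrite ?negbK; apply/eqP; apply: ord_inj; rewrite h1 h2.
have hI : 2 <= #|supp u :&: supp v|.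
  have <- : #|[set a; b]| = 2 by rewrite cards2 ab.
  apply: subset_leq_card; apply/subsetP => i; rewrite !inE.
  by case/orP => /eqP ->; rewrite ?ua ?va ?ub ?vb.
have hA : a \in supp u :|: supp v by rewrite !inE ua.
have hU := cardsD1 a (supp u :|: supp v); rewrite hA /= in hU.
have := cardsU (supp u) (supp v).
have := subset_leq_card sub.
rewrite /hdist => A B C0.
move: hI hU A B C0 Hsu Hsv.
set I := #|supp u :&: supp v|. set U := #|supp u :|: supp v|.
set W := #|(supp u :|: supp v) :\ a|.
set Dd := #|[set i | u i != v i]|. set Su := #|supp u|. set Sv := #|supp v|.
lia.
Qed.

Section Deg.
Variables (n : nat) (C : {set word n}).
Hypothesis HC : is_const_comp_code 6 3 1 C.

Lemma compC u : u \in C -> has_composition u 3 1.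
Proof. by case/andP: HC => /forall_inP H _ /H. Qed.

Lemma deg1 (x : 'I_n) : 3 * (\sum_(u in C) (nat_of_ord (u x) == 1)) <= n.-1.
Proof.
pose F (u : word n) := if nat_of_ord (u x) == 1 then supp u :\ x else set0.
have := @disj_count n (mem C) F x.
have -> : \sum_(u in C) #|F u| = 3 * (\sum_(u in C) (nat_of_ord (u x) == 1)).
  rewrite big_distrr /=; apply: eq_bigr => u uC; rewrite /F.
  case: ifP => h; last by rewrite cards0 muln0.
  have := cardsD1 x (supp u); rewrite supp_card ?compC // inE (eqP h) /= add1n.
  by move=> [<-]; rewrite muln1.
apply.
  by move=> u _; rewrite /F; case: ifP => _; rewrite !inE ?eqxx.
move=> u v y uC vC; rewrite /F.
case: ifP => hu; case: ifP => hv; rewrite ?in_set0 ?andbF //.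
rewrite !inE => /andP[yx uy] /andP[_ vy].
apply: (close HC uC vC (a:=x) (b:=y)) => //.
- by rewrite eq_sym.
- by rewrite (eqP hu).
- by rewrite (eqP hv).
- by apply: ord_inj; rewrite (eqP hu) (eqP hv).
Qed.

Lemma deg2 (x : 'I_n) : 2 * (\sum_(u in C) (nat_of_ord (u x) == 1)) +
   3 * (\sum_(u in C) (nat_of_ord (u x) == 2)) <= n.-1.
Proof.
pose F (u : word n) := if nat_of_ord (u x) != 0 then cnt u 1 :\ x else set0.
have := @disj_count n (mem C) F x.
have -> : \sum_(u in C) #|F u| = 2 * (\sum_(u in C) (nat_of_ord (u x) == 1)) +
   3 * (\sum_(u in C) (nat_of_ord (u x) == 2)).
  rewrite !big_distrr -big_split /=; apply: eq_bigr => u uC; rewrite /F.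
  have [/eqP h1 _] := andP (compC uC).
  have := cardsD1 x (cnt u 1); rewrite /wcount in h1; rewrite /cnt h1 inE.
  case: (val3 (u x)) => hx; rewrite hx /=; first by rewrite cards0.
    by set W := #|_ :\ x|; lia.
  by set W := #|_ :\ x|; lia.
apply.
  by move=> u _; rewrite /F; case: ifP => _; rewrite !inE ?eqxx.
move=> u v y uC vC; rewrite /F.
case: ifP => hu; case: ifP => hv; rewrite ?in_set0 ?andbF //.
rewrite !inE => /andP[yx /eqP uy] /andP[_ /eqP vy].
apply: (close HC uC vC (a:=y) (b:=x)) => //.
- by rewrite uy.
- by rewrite vy.
- by apply: ord_inj; rewrite uy vy.
Qed.

Lemma degsum (x : 'I_n) : \sum_(u in C) (nat_of_ord (u x) != 0) =
  \sum_(u in C) (nat_of_ord (u x) == 1) + \sum_(u in C) (nat_of_ord (u x) == 2).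
Proof. rewrite -big_split; apply: eq_bigr => u _; by case: (val3 (u x)) => ->. Qed.

Lemma dcount (D : nat) : (forall r s, 3 * r <= n.-1 -> 2 * r + 3 * s <= n.-1 -> r + s <= D) ->
  4 * #|C| <= n * D.
Proof.
move=> HD.
have -> : 4 * #|C| = \sum_(u in C) \sum_x (nat_of_ord (u x) != 0).
  rewrite -sum1_card big_distrr /=; apply: eq_bigr => u uC.
  rewrite -card_sum muln1 -(supp_card (compC uC)); apply: eq_card => i; by rewrite !inE.
rewrite exchange_big /=.
apply: (@leq_trans (\sum_(x < n) D)); last by rewrite sum_nat_const card_ord.
apply: leq_sum => x _; rewrite degsum; apply: HD; [exact: deg1 | exact: deg2].
Qed.
End Deg.

Lemma A3_bound n D : (forall r s, 3 * r <= n.-1 -> 2 * r + 3 * s <= n.-1 -> r + s <= D) ->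
  A3 n 6 3 1 <= (n * D) %/ 4.
Proof.
move=> HD; rewrite /A3; apply/bigmax_leqP => C PC.
rewrite leq_divRL // mulnC; exact: dcount.
Qed.

Theorem mainTheorem3 (t : nat) :
  [/\ A3 (9 * t + 4) 6 3 1 <= 9 * t ^ 2 + 6 * t + 1 + t %/ 4,
      A3 (9 * t + 5) 6 3 1 <= 9 * t ^ 2 + 7 * t + 1 + (t + 1) %/ 4
    & A3 (9 * t + 7) 6 3 1 <= 9 * t ^ 2 + 11 * t + 3 + (t + 1) %/ 2].
Proof.
split.
- apply: (leq_trans (A3_bound (D := 4 * t + 1) _)); first by move=> r s; lia.
  lia.
- apply: (leq_trans (A3_bound (D := 4 * t + 1) _)); first by move=> r s; lia.
  lia.
- apply: (leq_trans (A3_bound (D := 4 * t + 2) _)); first by move=> r s; lia.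
  lia.
Qed.
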